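(* Let $(E,\mathcal{I})$ be the partition matroid given by a partition $E_1,\dots,E_b$ of $E$ and positive integers $k_z\le|E_z|$. Suppose $f:2^E\times O^E\to\mathbb{R}_{\ge0}$ is adaptive monotone and adaptive submodular with respect to $p(\phi)$. Then the adaptive hybrid policy $\pi^m=\pi^{mw}@\pi^{ma}$ satisfies $f_{avg}(\pi^*_{avg})\le 3\,f_{avg}(\pi^m)$, where $\pi^*_{avg}$ maximizes $f_{avg}(\pi)$ over policies $\pi$ with $E(\pi,\phi)\in\mathcal{I}$ for all $\phi\in U^+$.
   Context: Setting. $E$ is a finite set of $n$ items and $O$ a finite set of states. A realization is a function $\phi:E\to O$; $p$ is a probability distribution (prior) on the set of all realizations, $\Phi$ denotes a random realization with law $p$, and $U^+=\{\phi: p(\phi)>0\}$. A partial realization is a function $\psi:S\to O$ with $S\subseteq E$, $\mathrm{dom}(\psi)=S$; it is identified with the set of pairs $\{(e,\psi(e)):e\in S\}$, so $\psi\subseteq\psi'$ means $\mathrm{dom}(\psi)\subseteq\mathrm{dom}(\psi')$ and they agree on $\mathrm{dom}(\psi)$. A realization $\phi$ is consistent with $\psi$, written $\phi\sim\psi$, if it agrees with $\psi$ on $\mathrm{dom}(\psi)$. Only partial realizations with $\Pr[\Phi\sim\psi]>0$ are considered, and $p(\phi\mid\psi)=\Pr[\Phi=\phi\mid\Phi\sim\psi]$. For $S\subseteq E$ and a partial realization $\psi$, $f(S,\psi)=\mathbb{E}[f(S,\Phi)\mid\Phi\sim\psi]$. For $e\notin\mathrm{dom}(\psi)$, let $O(e,\psi)=\{o\in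 O:\exists\phi\text{ with }p(\phi\mid\psi)>0,\ \phi(e)=o\}$ and define the worst-case marginal utility $f_{wc}(e\mid\psi)=\min_{o\in O(e,\psi)}\{f(\mathrm{dom}(\psi)\cup\{e\},\psi\cup\{(e,o)\})-f(\mathrm{dom}(\psi),\psi)\}$ and the expected marginal utility $f_{avg}(e\mid\psi)=\mathbb{E}[f(\mathrm{dom}(\psi)\cup\{e\},\Phi)-f(\mathrm{dom}(\psi),\Phi)\mid\Phi\sim\psi]$. $f$ is adaptive submodular if $f_{avg}(e\mid\psi)\ge f_{avg}(e\mid\psi')$ for all partial realizations $\psi\subseteq\psi'$ and $e\in E\setminus\mathrm{dom}(\psi')$, and adaptive monotone if $f_{avg}(e\mid\psi)\ge0$ for all $\psi$ and $e\notin\mathrm{dom}(\psi)$. Policies. A (deterministic) policy $\pi$ is a rule which, given the current observation (the partial realization of the items selected so far), either selects a new item or stops; after an item $e$ is selected under realization $\phi$, the state $\phi(e)$ is observed. $E(\pi,\phi)$ is the set of items selected by $\pi$ under $\phi$, and $f_{avg}(\pi)=\mathbb{E}[f(E(\pi,\Phi),\Phi)]$. The concatenation $\pi@\pi'$ runs $\pi$ and then runs $\pi'$ from scratch, ignoring the observations obtained by $\pi$; its selected set is the union of the two. Partition matroid: $\mathcal{I}=\{I\subseteq E:|I\cap E_z|\le k_z\ \forall z\in[b]\}$. Policy $\pi^{mw}$: starting from the empty observation $\psi=\emptyset$, for $z=1,\dots,b$ in turn, perform $\lfloor k_z/2\rfloor$ iterations, each selecting $e\in\arg\max_{e\in E_z\setminus\mathrm{dom}(\psi)}f_{wc}(e\mid\psi)$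 for the current observation $\psi$, observing $\Phi(e)$ and adding $(e,\Phi(e))$ to $\psi$. Policy $\pi^{ma}$: identical except that each meta-round $z$ performs $\lceil k_z/2\rceil$ iterations and uses $f_{avg}(e\mid\psi)$ in place of $f_{wc}(e\mid\psi)$. Ties are broken arbitrarily. $\pi^m=\pi^{mw}@\pi^{ma}$. *)

(* Defs.v *)
From mathcomp Require Import all_boot all_order all_algebra.
Set Implicit Arguments. Unset Strict Implicit. Unset Printing Implicit Defensive.
Import Order.TTheory GRing.Theory Num.Theory.
Local Open Scope ring_scope.

Section Adaptive.
Variables (E O : finType) (R : realFieldType).

Definition realization := {ffun E -> O}.
(* partial realizations: psi e = Some o iff (e,o) in psi; dom psi = {e | psi e <> None} *)
Definition prt := {ffun E -> option O}.

Definition dom (psi : prt) : {set E} := [set e | psi e != None].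
Definition empty_prt : prt := [ffun _ => None].
Definition ext (psi : prt) (e : E) (o : O) : prt :=
  [ffun x => if x == e then Some o else psi x].

Definition consistent (phi : realization) (psi : prt) : bool :=
  [forall e, if psi e is Some o then phi e == o else true].
Definition subprt (psi psi' : prt) : bool :=
  [forall e, (psi e != None) ==> (psi' e == psi e)].

Variables (p : realization -> R) (f : {set E} -> realization -> R).

Definition prob (psi : prt) : R := \sum_(phi | consistent phi psi) p phi.
Definition fcond (S : {set E}) (psi : prt) : R :=
  (\sum_(phi | consistent phi psi) p phi * f S phi) / prob psi.
Definition favg (e : E) (psi : prt) : R :=
  (\sum_(phi | consistent phi psi) p phi * (f (e |: dom psi) phi - f (dom psi) phi))
    / prob psi.
Definition Oset (e : E) (psi : prt) : {set O} :=
  [set o | [exists phi, [&& consistent phi psi, 0 < p phi & phi e == o]]].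
(* f_wc(e | psi): minimum over O(e,psi) (convention 0 if O(e,psi) empty,
   which only happens when Pr[Phi ~ psi] = 0) *)
Definition fwc (e : E) (psi : prt) : R :=
  let g o := fcond (e |: dom psi) (ext psi e o) - fcond (dom psi) psi in
  if [pick o in Oset e psi] is Some o0 then
    \big[Num.min/g o0]_(o in Oset e psi) g o
  else 0.

Definition adaptive_monotone : Prop :=
  forall (psi : prt) (e : E), 0 < prob psi -> e \notin dom psi -> 0 <= favg e psi.
Definition adaptive_submodular : Prop :=
  forall (psi psi' : prt) (e : E), subprt psi psi' -> 0 < prob psi -> 0 < prob psi' ->
    e \notin dom psi' -> favg e psi' <= favg e psi.

(* Deterministic policies: observation -> item to select (Some e) or stop (None). *)
Definition policy := prt -> option E.
Definition pstep (pi : policy) (phi : realization) (psi : prt) : prt :=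
  if pi psi is Some e then (if e \in dom psi then psi else ext psi e (phi e)) else psi.
(* each effective step adds a new item, so #|E| steps suffice *)
Definition prun (pi : policy) (phi : realization) : prt :=
  iter #|E| (pstep pi phi) empty_prt.
Definition sel (pi : policy) (phi : realization) : {set E} := dom (prun pi phi).
Definition favg_pol (pi : policy) : R := \sum_phi p phi * f (sel pi phi) phi.

(* partition matroid: part e = z  iff  e \in E_z *)
Variables (b : nat) (part : E -> 'I_b) (k : 'I_b -> nat).
Definition Epart (z : 'I_b) : {set E} := [set e | part e == z].
Definition indep (S : {set E}) : bool := [forall z, #|S :&: Epart z| <= k z]%N.

(* schedules of the meta-rounds z = 1..b: floor(k_z/2) resp. ceil(k_z/2) iterations *)
Definition sched_w : seq 'I_b := flatten [seq nseq (k z)./2 z | z <- enum 'I_b].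
Definition sched_a : seq 'I_b := flatten [seq nseq (uphalf (k z)) z | z <- enum 'I_b].

Definition greedy_choice (crit : E -> prt -> R) (choose : prt -> 'I_b -> E) : Prop :=
  forall (psi : prt) (z : 'I_b), (exists e, e \in Epart z :\: dom psi) ->
    choose psi z \in Epart z :\: dom psi /\
    (forall e, e \in Epart z :\: dom psi -> crit e psi <= crit (choose psi z) psi).

Definition greedy_run (choose : prt -> 'I_b -> E) (sched : seq 'I_b)
    (phi : realization) : prt :=
  foldl (fun psi z => let e := choose psi z in ext psi e (phi e)) empty_prt sched.

(* f_avg(pi^mw @ pi^ma): selected set is the union of the two runs *)
Definition favg_hybrid (chw cha : prt -> 'I_b -> E) : R :=
  \sum_phi p phi *
    f (dom (greedy_run chw sched_w phi) :|: dom (greedy_run cha sched_a phi)) phi.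

End Adaptive.

(* Main.v *)
Require Import Defs.
From mathcomp Require Import all_boot all_order all_algebra zify lra.
Import Order.TTheory GRing.Theory Num.Theory.
Local Open Scope ring_scope.
Set Implicit Arguments. Unset Strict Implicit. Unset Printing Implicit Defensive.

Section Gen.
Variables (E O : finType) (R : realFieldType).
Variables (p : realization E O -> R) (f : {set E} -> realization E O -> R).
Hypothesis p_ge0 : forall phi, 0 <= p phi.

Local Notation prt := (prt E O).
Local Notation rlz := (realization E O).

Definition stepo (oe : option E) (phi : rlz) (psi : prt) : prt :=
  if oe is Some e then ext psi e (phi e) else psi.

Definition uni (a q : prt) : prt := [ffun x => if a x is Some o then Some o else q x].

Definition adapted (G : rlz -> prt) :=
  forall phi, consistent phi (G phi) /\
    forall phi', consistent phi' (G phi) -> G phi' = G phi.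

Lemma consP (phi : rlz) (psi : prt) : reflect (forall e o, psi e = Some o -> phi e = o) (consistent phi psi).
Proof.
apply: (iffP forallP) => [H e o He | H e].
  by move: (H e); rewrite He => /eqP.
by case He: (psi e) => [o|] //; rewrite (H _ _ He).
Qed.

Lemma subprtP (psi psi' : prt) : reflect (forall e o, psi e = Some o -> psi' e = Some o) (subprt psi psi').
Proof.
apply: (iffP forallP) => [H e o He | H e].
  by move: (H e); rewrite He /= => /eqP.
by case He: (psi e) => [o|] //=; rewrite (H _ _ He).
Qed.

Lemma in_dom e (psi : prt) : (e \in dom psi) = (psi e != None).
Proof. by rewrite /dom inE. Qed.

Lemma dom_ext (psi : prt) e o : dom (ext psi e o) = e |: dom psi.
Proof. apply/setP => x; rewrite in_setU1 !in_dom /ext ffunE. by case: (x == e). Qed.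

Lemma dom_uni (a q : prt) : dom (uni a q) = dom a :|: dom q.
Proof. by apply/setP => x; rewrite in_setU !in_dom /uni ffunE; case: (a x). Qed.

Lemma uni0 (q : prt) : uni (empty_prt E O) q = q.
Proof. by apply/ffunP => x; rewrite !ffunE. Qed.

Lemma dom0 : dom (empty_prt E O) = set0.
Proof. by apply/setP => x; rewrite in_dom ffunE inE. Qed.

Lemma cons0 (phi : rlz) : consistent phi (empty_prt E O).
Proof. by apply/consP => e o; rewrite ffunE. Qed.

Lemma subprt_refl (psi : prt) : subprt psi psi.
Proof. by apply/subprtP. Qed.

Lemma subprt_trans (a b c : prt) : subprt a b -> subprt b c -> subprt a c.
Proof. by move=> /subprtP H1 /subprtP H2; apply/subprtP => e o /H1 /H2. Qed.

Lemma subprt_dom (a b : prt) : subprt a b -> dom a \subset dom b.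
Proof.
move=> /subprtP H; apply/subsetP => x; rewrite !in_dom.
by case Ha: (a x) => [o|] //; rewrite (H _ _ Ha).
Qed.

Lemma cons_sub (phi : rlz) (a b : prt) : subprt a b -> consistent phi b -> consistent phi a.
Proof. by move=> /subprtP H /consP C; apply/consP => e o /H /C. Qed.

Lemma sub_ext (phi : rlz) (psi : prt) e : consistent phi psi -> subprt psi (ext psi e (phi e)).
Proof.
move=> /consP C; apply/subprtP => x o Hx; rewrite /ext ffunE.
by case: (x =P e) => [Exe|_] //; subst x; rewrite (C _ _ Hx).
Qed.

Lemma cons_ext (phi : rlz) (psi : prt) e : consistent phi psi -> consistent phi (ext psi e (phi e)).
Proof.
move=> /consP C; apply/consP => x o; rewrite /ext ffunE.
by case: (x =P e) => [-> [<-]|_ /C].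
Qed.

Lemma sub_uni (a q : prt) : subprt a (uni a q).
Proof. by apply/subprtP => x o H; rewrite /uni ffunE H. Qed.

Lemma cons_uni (phi : rlz) (a q : prt) : consistent phi a -> consistent phi q -> consistent phi (uni a q).
Proof.
move=> /consP Ca /consP Cq; apply/consP => x o; rewrite /uni ffunE.
by case Hx: (a x) => [o'|]; [move=> [<-]; apply: Ca | apply: Cq].
Qed.

Lemma cons_uni_inv (phi phi0 : rlz) (a q : prt) : consistent phi0 a -> consistent phi0 q ->
  consistent phi (uni a q) -> consistent phi a /\ consistent phi q.
Proof.
move=> /consP Ca /consP Cq /consP C; split; apply/consP => x o H.
  by apply: C; rewrite /uni ffunE H.
case Hx: (a x) => [o'|].
  have := Ca _ _ Hx; rewrite (Cq _ _ H) => ->; apply: C; by rewrite /uni ffunE Hx.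
by apply: C; rewrite /uni ffunE Hx.
Qed.

Lemma adapted_uni (a q : rlz -> prt) : adapted a -> adapted q -> adapted (fun phi => uni (a phi) (q phi)).
Proof.
move=> Ha Hq phi; have [Ca Ea] := Ha phi; have [Cq Eq] := Hq phi.
split; first exact: cons_uni.
by move=> phi' /(cons_uni_inv Ca Cq) [/Ea -> /Eq ->].
Qed.

Lemma adapted_step (G : rlz -> prt) (n : prt -> option E) (G' : rlz -> prt) : adapted G ->
  (forall phi, G' phi = stepo (n (G phi)) phi (G phi)) -> adapted G'.
Proof.
move=> HG HG' phi; have [C EG] := HG phi; rewrite !HG'.
case Hn: (n (G phi)) => [e|] /=; last first.
  by split=> // phi' C'; rewrite HG' (EG _ C') Hn.
split; first exact: cons_ext.
move=> phi' C'; have C1 : consistent phi' (G phi).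
  by apply: cons_sub C'; apply: sub_ext.
rewrite HG' (EG _ C1) Hn /=.
have -> // : phi' e = phi e.
by move/consP: C' => /(_ e (phi e)); apply; rewrite /ext ffunE eqxx.
Qed.

Lemma adapted_const (psi : prt) : (forall phi, consistent phi psi) -> adapted (fun _ => psi).
Proof. by move=> H phi; split. Qed.

Lemma prob_ge (phi : rlz) (psi : prt) : consistent phi psi -> p phi <= prob p psi.
Proof.
move=> C; rewrite /prob (bigD1 phi) //= lerDl; apply: sumr_ge0 => *; exact: p_ge0.
Qed.

Lemma prob_ge0 (psi : prt) : 0 <= prob p psi.
Proof. by apply: sumr_ge0 => *; exact: p_ge0. Qed.

Lemma favg_dom e (psi : prt) : e \in dom psi -> favg p f e psi = 0.
Proof.
move=> He; rewrite /favg.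
have -> : e |: dom psi = dom psi.
  by apply/setP => x; rewrite in_setU1; case: eqP => // ->.
by rewrite big1 ?mul0r // => phi _; rewrite subrr mulr0.
Qed.

Lemma favg_num e (psi : prt) : favg p f e psi * prob p psi =
  \sum_(phi | consistent phi psi) p phi * (f (e |: dom psi) phi - f (dom psi) phi).
Proof.
have [P0|nz] := eqVneq (prob p psi) 0.
  rewrite P0 mulr0 big1 // => phi C.
  by rewrite (psumr_eq0P (fun i _ => p_ge0 i) P0 C) mul0r.
by rewrite /favg divfK.
Qed.


Lemma tower (G : rlz -> prt) (F : rlz -> R) : adapted G ->
  \sum_phi F phi = \sum_(psi in [set G x | x in [set: rlz]]) \sum_(phi | consistent phi psi) F phi.
Proof.
move=> HG.
transitivity (\sum_(phi in [set: rlz]) F phi); first by apply: eq_bigl => x; rewrite inE.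
rewrite (partition_big_imset G); apply: eq_bigr => psi /imsetP [x _ ->].
apply: eq_bigl => phi; rewrite inE /=; apply/eqP/idP => [<-|C]; first exact: (HG phi).1.
exact: (HG x).2.
Qed.

Definition dlt (oe : option E) (psi : prt) (phi : rlz) :=
  if oe is Some e then f (e |: dom psi) phi - f (dom psi) phi else 0.
Definition favgo (oe : option E) (psi : prt) := if oe is Some e then favg p f e psi else 0.

Lemma cond (G : rlz -> prt) (n : rlz -> option E) : adapted G ->
  (forall phi phi', consistent phi' (G phi) -> n phi' = n phi) ->
  \sum_phi p phi * dlt (n phi) (G phi) phi = \sum_phi p phi * favgo (n phi) (G phi).
Proof.
move=> HG Hn; rewrite (tower _ HG) [RHS](tower _ HG); apply: eq_bigr => psi /imsetP [x _ ->].
transitivity (\sum_(phi | consistent phi (G x)) p phi * dlt (n x) (G x) phi).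
  by apply: eq_bigr => phi C; rewrite ((HG x).2 _ C) (Hn _ _ C).
transitivity (\sum_(phi | consistent phi (G x)) p phi * favgo (n x) (G x)); last first.
  by apply: eq_bigr => phi C; rewrite ((HG x).2 _ C) (Hn _ _ C).
case: (n x) => [e|] /=; last by rewrite !big1 // => *; rewrite mulr0.
by rewrite -big_distrl /= -/(prob p (G x)) mulrC favg_num.
Qed.


Fixpoint runN (n : nat -> prt -> option E) (t : nat) (phi : rlz) : prt :=
  match t with 0 => empty_prt E O
  | t'.+1 => stepo (n t' (runN n t' phi)) phi (runN n t' phi) end.

Lemma adapted_run n t : adapted (runN n t).
Proof.
elim: t => [|t IH]; first by apply: adapted_const => phi; apply: cons0.
exact: (adapted_step (n := n t) IH).
Qed.

Lemma cons_run n t phi : consistent phi (runN n t phi).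
Proof. exact: (adapted_run n t phi).1. Qed.

Lemma sub_run n t t' phi : (t <= t')%N -> subprt (runN n t phi) (runN n t' phi).
Proof.
elim: t' => [|t' IH]; first by rewrite leqn0 => /eqP ->; apply: subprt_refl.
rewrite leq_eqVlt => /orP [/eqP ->|]; first exact: subprt_refl.
rewrite ltnS => /IH H; apply: subprt_trans H _ => /=.
case: (n t' _) => [e|] /=; last exact: subprt_refl.
exact: sub_ext (cons_run _ _ _).
Qed.

Lemma pair_step (a : rlz -> prt) n t : adapted a ->
  \sum_phi p phi * f (dom (a phi) :|: dom (runN n t.+1 phi)) phi
  - \sum_phi p phi * f (dom (a phi) :|: dom (runN n t phi)) phi
  = \sum_phi p phi * favgo (n t (runN n t phi)) (uni (a phi) (runN n t phi)).
Proof.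
move=> Ha; rewrite -sumrB.
transitivity (\sum_phi p phi * dlt (n t (runN n t phi)) (uni (a phi) (runN n t phi)) phi).
  apply: eq_bigr => phi _; rewrite -mulrBr /=; congr (_ * _).
  case: (n t _) => [e|] /=; last by rewrite subrr.
  by rewrite dom_ext dom_uni setUCA.
apply: (cond (G := fun phi => uni (a phi) (runN n t phi)) (n := fun phi => n t (runN n t phi))).
  exact: adapted_uni (adapted_run _ _).
move=> phi phi' /(cons_uni_inv ((Ha phi).1) (cons_run n t phi)) [_ C].
by rewrite ((adapted_run n t phi).2 _ C).
Qed.

Hypothesis mono : adaptive_monotone p f.
Hypothesis subm : adaptive_submodular p f.

Lemma favg_ge0 e (psi : prt) : 0 <= favg p f e psi.
Proof.
have [He|He] := boolP (e \in dom psi); first by rewrite favg_dom.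
have [P0|nz] := eqVneq (prob p psi) 0; first by rewrite /favg P0 invr0 mulr0.
apply: mono => //; rewrite lt_def nz; exact: prob_ge0.
Qed.

Lemma favgo_ge0 oe (psi : prt) : 0 <= favgo oe psi.
Proof. case: oe => [e|] //=; exact: favg_ge0. Qed.

Lemma mono_run (a : rlz -> prt) n T : adapted a ->
  \sum_phi p phi * f (dom (a phi)) phi <= \sum_phi p phi * f (dom (a phi) :|: dom (runN n T phi)) phi.
Proof.
move=> Ha; elim: T => [|T IH].
  by rewrite le_eqVlt; apply/orP; left; apply/eqP; apply: eq_bigr => phi _ /=; rewrite dom0 setU0.
apply: (le_trans IH); rewrite -subr_ge0 (pair_step _ _ Ha).
by apply: sumr_ge0 => phi _; rewrite mulr_ge0 // favgo_ge0.
Qed.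

Lemma bound_run (a : rlz -> prt) n T : adapted a ->
  \sum_phi p phi * f (dom (a phi) :|: dom (runN n T phi)) phi - \sum_phi p phi * f (dom (a phi)) phi
  <= \sum_phi p phi * \sum_(e in dom (runN n T phi)) favg p f e (a phi).
Proof.
move=> Ha; elim: T => [|T IH].
  rewrite (eq_bigr (fun phi => p phi * f (dom (a phi)) phi)) ?subrr.
    by apply: sumr_ge0 => phi _; rewrite mulr_ge0 // sumr_ge0 // => e _; exact: favg_ge0.
  by move=> phi _ /=; rewrite dom0 setU0.
rewrite -(subrKA (\sum_phi p phi * f (dom (a phi) :|: dom (runN n T phi)) phi)).
rewrite (pair_step _ _ Ha).
apply: le_trans (lerD (lexx _) IH) _.
rewrite -big_split /=; apply: ler_sum => phi _.
have [p0|pp] := eqVneq (p phi) 0; first by rewrite p0 !mul0r addr0.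
have ppos : 0 < p phi by rewrite lt_def pp p_ge0.
rewrite -mulrDr; apply: ler_wpM2l; first exact: p_ge0.
have Ca := (Ha phi).1; have CQ := cons_run n T phi.
rewrite /=; case: (n T _) => [e|] /=; last by rewrite add0r.
rewrite dom_ext.
have [eQ|eQ] := boolP (e \in dom (runN n T phi)).
  rewrite favg_dom ?add0r; last by rewrite dom_uni in_setU eQ orbT.
  have -> : e |: dom (runN n T phi) = dom (runN n T phi).
    by apply/setP => x; rewrite in_setU1; case: (x =P e) => // ->.
  by [].
rewrite big_setU1 //= lerD2r.
have [ea|ea] := boolP (e \in dom (a phi)).
  by rewrite !favg_dom // dom_uni in_setU ea.
apply: subm; first exact: sub_uni.
- exact: lt_le_trans ppos (prob_ge Ca).
- exact: lt_le_trans ppos (prob_ge (cons_uni Ca CQ)).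
by rewrite dom_uni in_setU negb_or ea eQ.
Qed.

Lemma gain_run n T :
  \sum_phi p phi * f (dom (runN n T phi)) phi - \sum_phi p phi * f set0 phi
  = \sum_phi p phi * \sum_(t < T) favgo (n t (runN n t phi)) (runN n t phi).
Proof.
elim: T => [|T IH].
  rewrite [RHS]big1 => [|phi _]; last by rewrite big_ord0 mulr0.
  by apply/eqP; rewrite subr_eq0; apply/eqP; apply: eq_bigr => phi _ /=; rewrite dom0.
have Ha : adapted (fun _ : rlz => empty_prt E O) by apply: adapted_const => phi; apply: cons0.
have := @pair_step (fun _ => empty_prt E O) n T Ha.
under eq_bigr do rewrite dom0 set0U.
under [X in _ - X = _]eq_bigr do rewrite dom0 set0U.
under [RHS]eq_bigr do rewrite uni0.
move=> H.
rewrite -(subrKA (\sum_phi p phi * f (dom (runN n T phi)) phi)) H IH -big_split /=.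
apply: eq_bigr => phi _; by rewrite big_ord_recr /= mulrDr addrC.
Qed.


Lemma prun_run (pi : policy E O) phi : prun pi phi = runN (fun _ => pi) #|E| phi.
Proof.
rewrite /prun; elim: #|E| => [|s IH] //=; rewrite IH /pstep.
case: (pi _) => [e|] //=; case: ifP => // He.
apply/ffunP => x; rewrite /ext ffunE; case: (x =P e) => // ->.
move: He; rewrite in_dom; case Hx: (runN _ s phi e) => [o|] // _.
by move/consP: (cons_run (fun _ => pi) s phi) => /(_ _ _ Hx) ->.
Qed.

Variables (b : nat) (part : E -> 'I_b) (k : 'I_b -> nat) (z0 : 'I_b).

Definition gn (ch : prt -> 'I_b -> E) (sch : seq 'I_b) (t : nat) (psi : prt) : option E :=
  Some (ch psi (nth z0 sch t)).

Lemma greedy_runN ch sch t phi : (t <= size sch)%N ->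
  greedy_run ch (take t sch) phi = runN (gn ch sch) t phi.
Proof.
elim: t => [|t IH] Ht; first by rewrite take0.
by rewrite (take_nth z0) // /greedy_run foldl_rcons -/(greedy_run _ _ _) IH 1?ltnW.
Qed.

Lemma greedy_runN_full ch sch phi :
  greedy_run ch sch phi = runN (gn ch sch) (size sch) phi.
Proof. by rewrite -greedy_runN // take_size. Qed.


Lemma count_sched z : count_mem z (sched_a k) = uphalf (k z).
Proof.
rewrite /sched_a count_flatten -map_comp sumnE big_map (bigD1_seq z) ?mem_enum ?enum_uniq //=.
rewrite count_nseq /= eqxx mul1n big1_seq ?addn0 // => z' /andP [nz _].
by rewrite count_nseq /= (negbTE nz).
Qed.

Hypothesis hk : forall z : 'I_b, (0 < k z <= #|Epart part z|)%N.
Variable cha : prt -> 'I_b -> E.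
Hypothesis gc : greedy_choice part (favg p f) cha.

Local Notation sch := (sched_a k).
Local Notation A := (runN (gn cha sch)).

Lemma inv_pick phi t : (t <= size sch)%N ->
  (forall z, (#|dom (A t phi) :&: Epart part z| <= count_mem z (take t sch))%N) /\
  (forall t', (t' < t)%N -> cha (A t' phi) (nth z0 sch t') \in Epart part (nth z0 sch t') :\: dom (A t' phi)).
Proof.
elim: t => [|t IH] Ht.
  by split=> [z|//]; rewrite dom0 set0I cards0.
have [IH1 IH2] := IH (ltnW Ht).
set zt := nth z0 sch t.
have cnt z : count_mem z (take t.+1 sch) = (count_mem z (take t sch) + (zt == z))%N.
  by rewrite (take_nth z0) // -cats1 count_cat /= addn0.
have ne : exists e, e \in Epart part zt :\: dom (A t phi).
  case: (pickP (mem (Epart part zt :\: dom (A t phi)))) => [e He|H]; first by exists e.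
  exfalso.
  have sub : Epart part zt \subset dom (A t phi) :&: Epart part zt.
    apply/subsetP => x Hx; rewrite inE Hx andbT.
    by move: (H x); rewrite /= inE Hx andbT => /negbFE.
  have := subset_leq_card sub; have := IH1 zt; have := hk zt.
  have : (count_mem zt (take t.+1 sch) <= count_mem zt sch)%N.
    by rewrite -{2}(cat_take_drop t.+1 sch) count_cat leq_addr.
  rewrite cnt eqxx count_sched.
  have : (uphalf (k zt) <= k zt)%N by case: (k zt) => // n; rewrite uphalf_half /=; case: (odd n) => /=; rewrite ?uphalf_half; lia.
  lia.
have [Hc _] := gc ne.
split; last first.
  move=> t'; rewrite ltnS leq_eqVlt => /orP [/eqP ->|]; first exact: Hc.
  exact: IH2.
move=> z /=; rewrite dom_ext setIUl cnt.
apply: leq_trans (leq_card_setU _ _).1 _; rewrite addnC leq_add //.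
have [ez|nz] := eqVneq zt z.
  by apply: leq_trans (subset_leq_card (subsetIl _ _)) _; rewrite cards1.
rewrite (_ : [set _] :&: _ = set0) ?cards0 //; apply/setP => x; rewrite !inE.
case: (x =P _) => //= ->; move: Hc; rewrite !inE => /andP [_ /eqP ->].
by rewrite (negbTE nz).
Qed.

Lemma main_pw phi (S : {set E}) : 0 < p phi -> indep part k S ->
  \sum_(e in S) favg p f e (A (size sch) phi)
  <= 2 * \sum_(t < size sch) favg p f (cha (A t phi) (nth z0 sch t)) (A t phi).
Proof.
move=> pp /forallP HS.
set T := size sch.
have key : forall (t : 'I_T) e, part e == nth z0 sch t ->
    favg p f e (A T phi) <= favg p f (cha (A t phi) (nth z0 sch t)) (A t phi).
  move=> t e He.
  have [eT|eT] := boolP (e \in dom (A T phi)); first by rewrite favg_dom // favg_ge0.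
  have st : subprt (A t phi) (A T phi) by apply: sub_run; exact: ltnW (ltn_ord t).
  have et : e \notin dom (A t phi) by apply: contra eT; apply: (subsetP (subprt_dom st)).
  apply: (@le_trans _ _ (favg p f e (A t phi))).
    apply: subm st _ _ eT.
    - exact: lt_le_trans pp (prob_ge (cons_run _ _ _)).
    - exact: lt_le_trans pp (prob_ge (cons_run _ _ _)).
  have ex : exists e0, e0 \in Epart part (nth z0 sch t) :\: dom (A t phi).
    by exists e; rewrite in_setD et /Epart inE He.
  have [_ Hmax] := gc ex; apply: Hmax; by rewrite in_setD et /Epart inE He.
rewrite (partition_big part predT) //=.
rewrite [X in _ <= 2 * X](partition_big (fun t : 'I_T => nth z0 sch t) predT) //= mulr_sumr.
apply: ler_sum => z _.
set X := \sum_(t < T | true && (nth z0 sch t == z)) _.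
have X0 : 0 <= X by apply: sumr_ge0 => t _; apply: favg_ge0.
have Hn : (\sum_(t < T | true && (nth z0 sch t == z)) 1)%N = uphalf (k z).
  rewrite -count_sched -[X in count _ X](mkseq_nth z0 sch) /mkseq count_map -sum1_count.
  rewrite (eq_bigl (fun t : 'I_T => nth z0 sch t == z)) //. rewrite -(big_mkord (fun j => nth z0 sch j == z) (fun _ => 1%N)). by rewrite /index_iota subn0.
have Hu : \sum_(t < T | true && (nth z0 sch t == z)) (1 : R) = (uphalf (k z))%:R.
  by rewrite -Hn natr_sum.
have up : (0 < uphalf (k z))%N by move: (hk z); case: (k z).
have kz : (k z <= 2 * uphalf (k z))%N by rewrite uphalf_half -{1}(odd_double_half (k z)); lia.
have ge : forall e, part e == z -> favg p f e (A T phi) <= X / (uphalf (k z))%:R.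
  move=> e Hz; rewrite ler_pdivlMr ?ltr0n //.
  rewrite -Hu mulr_sumr; apply: ler_sum => t /= /eqP Ht; rewrite mulr1; apply: key.
  by rewrite Ht.
apply: (@le_trans _ _ (\sum_(e in S | part e == z) X / (uphalf (k z))%:R)).
  by apply: ler_sum => e /andP [_ ez]; exact: ge.
rewrite sumr_const.
have cle : (#|(fun i : E => (i \in S) && (part i == z))| <= k z)%N.
  rewrite (eq_card (B := S :&: Epart part z)) ?HS // => e; by rewrite !inE.
apply: (@le_trans _ _ ((2 * uphalf (k z))%:R * (X / (uphalf (k z))%:R))).
  rewrite -[X / _ *+ _]mulr_natl.
  apply: ler_wpM2r; first by rewrite divr_ge0 ?ler0n.
  by rewrite ler_nat (leq_trans cle kz).
rewrite natrM -mulrA [_%:R * (X / _)]mulrC divfK //.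
by rewrite pnatr_eq0 -lt0n.
Qed.

End Gen.
Lemma comb (R : realFieldType) (XP XPA XAP Y Z W G H F : R) :
  XP <= XPA -> XPA = XAP -> XAP - Y <= Z -> Z <= W -> W = 2 * G -> Y - F = G ->
  0 <= F -> Y <= H -> XP <= 3 * H.
Proof. move=> *; lra. Qed.

Lemma comb0 (R : realFieldType) (X : R) : 0 <= X -> X <= 3 * X.
Proof. move=> *; lra. Qed.

Theorem lemma2 (E O : finType) (R : realFieldType) (b : nat)
    (part : E -> 'I_b) (k : 'I_b -> nat)
    (p : {ffun E -> O} -> R) (f : {set E} -> {ffun E -> O} -> R)
    (chw cha : {ffun E -> option O} -> 'I_b -> E) :
  (forall z : 'I_b, 0 < k z <= #|Epart part z|)%N ->
  (forall phi, 0 <= p phi) -> \sum_phi p phi = 1 ->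
  (forall S phi, 0 <= f S phi) ->
  adaptive_monotone p f -> adaptive_submodular p f ->
  greedy_choice part (fwc p f) chw ->
  greedy_choice part (favg p f) cha ->
  forall pi : policy E O,
    (forall phi, 0 < p phi -> indep part k (sel pi phi)) ->
    favg_pol p f pi <= 3 * favg_hybrid p f k chw cha.
Proof.
move=> hk p0 _ f0 mono subm _ gc pi Hind.
have F0 : 0 <= \sum_phi p phi * f set0 phi by apply: sumr_ge0 => phi _; rewrite mulr_ge0.
case: b part k chw cha hk gc Hind => [|b'] part k chw cha hk gc Hind.
  have E0 : forall e : E, False by move=> e; case: (part e).
  have S0 : forall S : {set E}, S = set0 by move=> S; apply/setP => e; case: (E0 e).
  rewrite /favg_pol /favg_hybrid.
  under eq_bigr do rewrite [sel pi _]S0.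
  under [X in _ <= 3 * X]eq_bigr do rewrite [_ :|: _]S0.
  exact: comb0.
pose z0 : 'I_b'.+1 := ord0.
set Pn := runN (fun _ => pi) #|E|.
set na := gn z0 cha (sched_a k).
set A := runN na (size (sched_a k)).
set B := runN (gn z0 chw (sched_w k)) (size (sched_w k)).
have polE : favg_pol p f pi = \sum_phi p phi * f (dom (Pn phi)) phi.
  by apply: eq_bigr => phi _; rewrite /sel prun_run.
have hybE : favg_hybrid p f k chw cha = \sum_phi p phi * f (dom (A phi) :|: dom (B phi)) phi.
  by apply: eq_bigr => phi _; rewrite !(greedy_runN_full z0) setUC.
have I1 := mono_run p0 mono na (size (sched_a k)) (adapted_run (fun _ => pi) #|E|).
have I2 := bound_run p0 mono subm (fun _ => pi) #|E| (adapted_run na (size (sched_a k))).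
have I3 : \sum_phi p phi * \sum_(e in dom (Pn phi)) favg p f e (A phi)
   <= \sum_phi p phi * (2 * \sum_(t < size (sched_a k)) favgo p f (na t (runN na t phi)) (runN na t phi)).
  apply: ler_sum => phi _.
  have [pz|pnz] := eqVneq (p phi) 0; first by rewrite pz !mul0r.
  have pp : 0 < p phi by rewrite lt_def pnz p0.
  apply: ler_wpM2l; first exact: p0.
  have := Hind phi pp; rewrite /sel prun_run => Hi.
  exact: (main_pw p0 mono subm z0 hk gc pp Hi).
have I4 := gain_run f p0 na (size (sched_a k)).
have I5 := mono_run p0 mono (gn z0 chw (sched_w k)) (size (sched_w k)) (adapted_run na (size (sched_a k))).
rewrite polE hybE.
have e2 : \sum_phi p phi * (2 * \sum_(t < size (sched_a k)) favgo p f (na t (runN na t phi)) (runN na t phi))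
   = 2 * \sum_phi p phi * \sum_(t < size (sched_a k)) favgo p f (na t (runN na t phi)) (runN na t phi).
  by rewrite mulr_sumr; apply: eq_bigr => phi _; rewrite mulrCA.
have e3 : \sum_phi p phi * f (dom (Pn phi) :|: dom (A phi)) phi
   = \sum_phi p phi * f (dom (A phi) :|: dom (Pn phi)) phi.
  by apply: eq_bigr => phi _; rewrite setUC.
rewrite /Pn /A /B in I3 e3 polE hybE *. refine (@comb R _ _ _ _ _ _ _ _ _ I1 e3 I2 I3 e2 I4 F0 I5).
Qed.
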